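(* Let $t\ge0$ and $i\ge -t$ be integers. Let $\Phi(z)=\sum_{n\ge0}c_nz^n$, where $c_n$ is the number of Deutsch paths of $n$ steps from $(0,0)$ to $(n,i)$ that never go below level $-t$. Let $v=v(z)$ be the power series with $v(0)=0$ satisfying $z=\frac{v}{1+v+v^2}$. Then $$\Phi(z)=\frac{(1+v)^{-i-2}(1-v^{i+t+1})\,v\,(1+v+v^2)}{1-v}\quad\text{for } i<0,$$ $$\Phi(z)=\frac{v^{i}(1-v^{t+2})(1+v+v^2)}{(1-v)(1+v)^{i+2}}\quad\text{for } i\ge0.$$
   Context: A Deutsch path is a lattice path whose steps are up-steps $(1,1)$ and down-steps $(1,-k)$ for any integer $k\ge1$. The series $v$ is given explicitly by $v=\frac{1-z-\sqrt{1-2z-3z^2}}{2z}$. *)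

(* Defs.v *)
From mathcomp Require Import all_boot all_order all_algebra.
Set Implicit Arguments. Unset Strict Implicit. Unset Printing Implicit Defensive.
Import Order.TTheory GRing.Theory Num.Theory.
Local Open Scope ring_scope.

(* A path with n steps is encoded by the list of the vertical displacements
   of its steps: an up-step (1,1) is encoded by 1, a down-step (1,-k),
   k >= 1, by -k. *)
Definition deutsch_step (s : int) : bool := (s == 1) || (s <= -1).

Definition height (p : seq int) (k : nat) : int := \sum_(x <- take k p) x.

Definition deutsch_path (t : nat) (i : int) (n : nat) (p : seq int) : bool :=
  [&& size p == n, all deutsch_step p, height p n == i &
      [forall k : 'I_n.+1, - (t%:Z) <= height p k]].

Definition fps := nat -> rat.
Definition fconst (c : rat) : fps := fun n => if n == 0%N then c else 0.
Definition fone : fps := fconst 1.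
Definition fX : fps := fun n => if n == 1%N then 1 else 0.
Definition fadd (f g : fps) : fps := fun n => f n + g n.
Definition fsub (f g : fps) : fps := fun n => f n - g n.
Definition fmul (f g : fps) : fps :=
  fun n => \sum_(k < n.+1) f k * g (n - k)%N.
Fixpoint fpow (f : fps) (m : nat) : fps :=
  if m is m'.+1 then fmul f (fpow f m') else fone.

(* multiplicative inverse of a series with nonzero constant term:
   g 0 = 1/f 0,  g n = -(1/f 0) * sum_{k<n} f (n-k) g k *)
Fixpoint finv_aux (f : fps) (n : nat) : seq rat :=
  if n is n'.+1 then
    let s := finv_aux f n' in
    rcons s (- (f 0%N)^-1 * \sum_(k < n'.+1) f (n'.+1 - k)%N * nth 0 s k)
  else [:: (f 0%N)^-1].
Definition finv (f : fps) : fps := fun n => nth 0 (finv_aux f n) n.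

Definition fdiv (f g : fps) : fps := fmul f (finv g).

Definition fpowz (f : fps) (z : int) : fps :=
  match z with
  | Posz m => fpow f m
  | Negz m => fpow (finv f) m.+1
  end.

(* Main.v *)
From HB Require Import structures.
From mathcomp Require Import all_boot all_order all_algebra.
From mathcomp Require Import boolp.
From mathcomp Require Import ring lra zify.
Require Import Defs.
Set Implicit Arguments. Unset Strict Implicit. Unset Printing Implicit Defensive.
Import Order.TTheory GRing.Theory Num.Theory.
Local Open Scope ring_scope.

Definition ps : Type := nat -> rat.
HB.instance Definition _ := gen_eqMixin ps.
HB.instance Definition _ := gen_choiceMixin ps.

Definition pzero : ps := fun _ => 0.
Definition popp (f : ps) : ps := fun n => - f n.
Definition padd (f g : ps) : ps := fadd f g.

Lemma fext (f g : ps) : (forall n, f n = g n) -> f = g.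
Proof. move=> H; apply: funext => n; exact: H. Qed.

Fact paddA : associative padd.
Proof. by move=> f g h; apply: fext => n; rewrite /padd /fadd addrA. Qed.
Fact paddC : commutative padd.
Proof. by move=> f g; apply: fext => n; rewrite /padd /fadd addrC. Qed.
Fact padd0 : left_id pzero padd.
Proof. by move=> f; apply: fext => n; rewrite /padd /fadd /pzero add0r. Qed.
Fact paddN : left_inverse pzero popp padd.
Proof. by move=> f; apply: fext => n; rewrite /padd /fadd /pzero /popp addNr. Qed.

HB.instance Definition _ := GRing.isZmodule.Build ps paddA paddC padd0 paddN.

Definition pmul (f g : ps) : ps := fmul f g.

Lemma fmul_rev (f g : ps) n : fmul f g n = \sum_(j < n.+1) f (n - j)%N * g j.
Proof.
rewrite /fmul (reindex_inj rev_ord_inj) /=.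
by apply: eq_bigr => j _; rewrite (sub_ordK j).
Qed.

Fact pmulC : commutative pmul.
Proof.
move=> f g; apply: fext => n; rewrite /pmul fmul_rev /fmul.
by apply: eq_bigr => j _; rewrite mulrC.
Qed.

Fact pmulA : associative pmul.
Proof.
move=> p q r; apply: fext => i; rewrite /pmul {1}/fmul [RHS]fmul_rev.
pose coef3 j k := p j * (q (i - j - k)%N * r k).
transitivity (\sum_(j < i.+1) \sum_(k < i.+1 | (k <= i - j)%N) coef3 j k).
  apply: eq_bigr => /= j _; rewrite fmul_rev big_distrr /=.
  by rewrite (big_ord_narrow_leq (leq_subr _ _)).
rewrite (exchange_big_dep predT) //=; apply: eq_bigr => k _.
transitivity (\sum_(j < i.+1 | (j <= i - k)%N) coef3 j k).
  apply: eq_bigl => j; rewrite -ltnS -(ltnS j) -!subSn ?leq_ord //.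
  by rewrite -subn_gt0 -(subn_gt0 j) -!subnDA addnC.
rewrite (big_ord_narrow_leq (leq_subr _ _)) /fmul big_distrl /=.
by apply: eq_bigr => j _; rewrite /coef3 -!subnDA addnC mulrA.
Qed.

Fact pmul1 : left_id fone pmul.
Proof.
move=> p; apply: fext => i; rewrite /pmul /fmul big_ord_recl subn0 /fone /fconst /=.
by rewrite mul1r big1 ?addr0 // => j _; rewrite mul0r.
Qed.

Fact pmulDl : left_distributive pmul padd.
Proof.
move=> f g h; apply: fext => n; rewrite /pmul /padd /fmul /fadd -big_split /=.
by apply: eq_bigr => j _; rewrite mulrDl.
Qed.

Fact pone_neq0 : fone != (0 : ps).
Proof.
apply/eqP => H; have := congr1 (fun f : ps => f 0%N) H.
by rewrite /fone /fconst /=; move/eqP; rewrite oner_eq0.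
Qed.

HB.instance Definition _ := GRing.Zmodule_isComNzRing.Build ps pmulA pmulC pmul1 pmulDl pone_neq0.

Lemma psE0 n : (0 : ps) n = 0. Proof. by []. Qed.
Lemma psD (f g : ps) n : (f + g) n = f n + g n. Proof. by []. Qed.
Lemma psN (f : ps) n : (- f) n = - f n. Proof. by []. Qed.
Lemma psB (f g : ps) n : (f - g) n = f n - g n. Proof. by []. Qed.
Lemma psM (f g : ps) n : (f * g) n = \sum_(k < n.+1) f k * g (n - k)%N. Proof. by []. Qed.
Lemma ps1 n : (1 : ps) n = if n == 0%N then 1 else 0. Proof. by []. Qed.
Lemma fmulE (f g : ps) : fmul f g = f * g. Proof. by []. Qed.
Lemma faddE (f g : ps) : fadd f g = f + g. Proof. by []. Qed.
Lemma fsubE (f g : ps) : fsub f g = f - g. Proof. by []. Qed.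
Lemma foneE : fone = 1 :> ps. Proof. by []. Qed.
Lemma fpowE (f : ps) m : fpow f m = f ^+ m.
Proof. elim: m => [|m IH] //=; by rewrite IH exprS. Qed.

Definition pinv (f : ps) : ps := finv f.

Lemma size_finv_aux (f : ps) n : size (finv_aux f n) = n.+1.
Proof. by elim: n => [|n IH] //=; rewrite size_rcons IH. Qed.

Lemma nth_finv_aux (f : ps) n k : (k <= n)%N -> nth 0 (finv_aux f n) k = finv f k.
Proof.
elim: n => [|n IH]; first by rewrite leqn0 => /eqP ->.
rewrite leq_eqVlt => /orP [/eqP -> //| lt]; rewrite /= nth_rcons size_finv_aux lt.
exact: IH.
Qed.

Lemma finvS (f : ps) n : finv f n.+1 =
  - (f 0%N)^-1 * \sum_(k < n.+1) f (n.+1 - k)%N * finv f k.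
Proof.
rewrite /finv /= nth_rcons size_finv_aux ltnn eqxx; congr (_ * _).
by apply: eq_bigr => k _; rewrite nth_finv_aux // -ltnS.
Qed.

Lemma finv0 (f : ps) : pinv f 0%N = (f 0%N)^-1. Proof. by []. Qed.
Lemma pinvS (f : ps) n : pinv f n.+1 =
  - (f 0%N)^-1 * \sum_(k < n.+1) f (n.+1 - k)%N * pinv f k.
Proof. exact: finvS. Qed.

Lemma psM0 (f g : ps) : (f * g) 0%N = f 0%N * g 0%N.
Proof. by rewrite psM big_ord_recl big_ord0 addr0. Qed.

Lemma psX0 (f : ps) m : (f ^+ m) 0%N = f 0%N ^+ m.
Proof. elim: m => [|m IH]; first by rewrite !expr0. by rewrite !exprS psM0 IH. Qed.

Lemma finvK (f : ps) : f 0%N != 0 -> pinv f * f = 1.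
Proof.
move=> f0; apply: fext => -[|n].
  by rewrite psM0 finv0 mulVf.
rewrite psM big_ord_recr /= subnn pinvS ps1 /=.
rewrite (_ : \sum_(i < n.+1) pinv f i * f (n.+1 - i)%N =
             \sum_(k < n.+1) f (n.+1 - k)%N * pinv f k); last first.
  by apply: eq_bigr => k _; rewrite mulrC.
set S := \sum_(k < _) _.
move: (f 0%N) f0 S => a a0 s; by field.

Qed.

Lemma finv_uniq (f x : ps) : f 0%N != 0 -> x * f = 1 -> x = pinv f.
Proof.
move=> f0 H; rewrite -[x]mulr1 -(finvK f0) mulrA [x * _]mulrC -mulrA H mulr1.
done.
Qed.

Lemma finvM (f g : ps) : f 0%N != 0 -> g 0%N != 0 -> pinv (f * g) = pinv f * pinv g.
Proof.
move=> f0 g0; symmetry; apply: finv_uniq; first by rewrite psM0 mulf_neq0.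
by rewrite mulrACA !finvK // mulr1.
Qed.

Lemma finvX (f : ps) m : f 0%N != 0 -> pinv (f ^+ m) = pinv f ^+ m.
Proof.
move=> f0; symmetry; apply: finv_uniq; first by rewrite psX0 expf_neq0.
by rewrite -exprMn finvK // expr1n.
Qed.

Definition pX : ps := fX.
Lemma psXS (f : ps) n : (pX * f) n.+1 = f n.
Proof.
rewrite psM big_ord_recl /pX /fX /= mul0r add0r big_ord_recl /= subn1 /= mul1r.
by rewrite big1 ?addr0 // => j _; rewrite mul0r.
Qed.

Lemma psX0' (f : ps) : (pX * f) 0%N = 0.
Proof. by rewrite psM0 /pX /fX /= mul0r. Qed.

Definition ord_ge (f : ps) (a : nat) := forall j, (j < a)%N -> f j = 0.

Lemma ord_geM f g a b : ord_ge f a -> ord_ge g b -> ord_ge (f * g) (a + b).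
Proof.
move=> Hf Hg j lt; rewrite psM big1 // => k _.
have [ka|ka] := ltnP k a; first by rewrite Hf // mul0r.
by rewrite Hg ?mulr0 //; have := ltn_ord k; lia.
Qed.

Lemma ord_geX f a m : ord_ge f a -> ord_ge (f ^+ m) (a * m).
Proof.
move=> H; elim: m => [|m IH]; first by move=> j; rewrite muln0.
by rewrite exprS mulnS; apply: ord_geM.
Qed.

Lemma ord_ge0 f : ord_ge f 0. Proof. by []. Qed.

Section Alg.
Variable R : comNzRingType.
Variables (t : nat) (v u w : R).
Hypothesis Hu : u * (1 + v) = 1.
Hypothesis Hw : w = 1 + v + v ^+ 2.

Definition Ah (k : nat) : R :=
  if (t <= k)%N then (v * u) ^+ (k - t) * (1 - v ^+ t.+2)
  else (1 + v) ^+ (t - k) * v * (1 - v ^+ k.+1).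
Definition Ap (k : nat) : R := if k is k'.+1 then Ah k' else 0.

Lemma Ah_ident k :
  w * (Ah k - Ah k.+1) - v * (Ap k - Ah k + Ah k.+1) =
  ((k == t)%:R - (k.+1 == t)%:R) * (1 + v) ^+ 2 * (1 - v).
Proof.
rewrite /Ap /Ah.
have [lt|ge] := ltnP t k.
  have -> : (k == t) = false by apply/eqP; lia.
  have -> : (k.+1 == t) = false by apply/eqP; lia.
  case: k lt => [//|k] lt.
  have h1 : (t <= k)%N by []. have h2 : (t <= k.+1)%N by lia. have h3 : (t <= k.+2)%N by lia. rewrite h1 h2 h3.
  have -> : (k.+2 - t = (k - t).+2)%N by lia.
  have -> : (k.+1 - t = (k - t).+1)%N by lia.
  move: (k - t)%N => d; rewrite mulr0n subr0 mul0r !exprS.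
  have K : forall X : R, X = X * (u * (1+v)) ^+ 2 by move=> X; rewrite Hu expr1n mulr1.
  rewrite [LHS]K Hw.
  transitivity ((v * u) ^+ d * (1 - v * (v * v ^+ t)) * v * u ^+ 2 * ((1 + v + v^+2) * (u * (1 + v)) * (1 + v) -
     (1 + v + v^+2) * v * (u * (1 + v)) ^+ 2 - (1 + v) ^+ 2 +
     v * (u * (1 + v)) * (1 + v) - v ^+ 2 * (u * (1 + v)) ^+ 2)); first by ring.
  by rewrite Hu; ring.
rewrite leq_eqVlt in ge; case/orP: ge => [/eqP kt | lt].
  subst k; rewrite leqnn eqxx subnn leqnSn.
  have -> : (t.+1 == t) = false by apply/eqP; lia.
  have -> : (t.+1 - t = 1)%N by lia.
  case: t Hu => [|t'] Hu'.
    rewrite /=. rewrite expr0 expr1 mul1r !subr0 Hw.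
    transitivity ((1 + v + v ^+ 2) * (1 - v ^+ 2) + v * (1 - v ^+ 2)
       - v * (1 - v ^+ 2) * (1 + v) * (u * (1 + v))); first by ring.
    by rewrite Hu' /= ?mulr1n ?mulr0n ?subr0 !exprS; ring.
  rewrite ltnn subSn // subnn Hw.
  transitivity ((1 + v + v ^+ 2) * (1 - v ^+ t'.+3) + v * (1 - v ^+ t'.+3)
     - (1 + v) * v ^+ 2 * (1 - v ^+ t'.+1)
     - v * (1 - v ^+ t'.+3) * (1 + v) * (u * (1 + v))); first by ring.
  by rewrite Hu' /= ?mulr1n ?mulr0n ?subr0 !exprS; ring.
have -> : (k == t) = false by apply/eqP; lia.
have -> : (t <= k)%N = false by lia.
case: (ltnP k.+1 t) => [lt2 | ge2].
  have -> : (k.+1 == t) = false by apply/eqP; lia.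
  rewrite mulr0n subrr !mul0r.
  have E1 : (t - k.+1 = (t - k.+2).+1)%N by lia.
  have E2 : (t - k = (t - k.+2).+2)%N by lia.
  rewrite E1 E2.
  case: k {E1 E2} lt lt2 => [|k] lt lt2 /=.
    by rewrite Hw !exprS; ring.
  have -> : (t <= k)%N = false by lia.
  have E3 : (t - k = (t - k.+3).+3)%N by lia.
  by rewrite E3 Hw !exprS; ring.
have kt : t = k.+1 by lia.
subst t; rewrite subnn eqxx mulr1n.
have -> : (k.+1 - k = 1)%N by lia.
case: k lt ge2 => [|k] _ _ /=.
  by rewrite Hw !exprS ?mulr0n; ring.
have -> : (k.+2 <= k)%N = false by lia.
have -> : (k.+2 - k = 2)%N by lia.
by rewrite Hw !exprS ?mulr0n; ring.
Qed.

Variables (e iw z : R).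
Hypothesis He : e * (1 - v) = 1.
Hypothesis Hiw : iw * w = 1.
Hypothesis Hz : z = v * iw.

Definition Af k := u ^+ 2 * w * e * Ah k.
Definition Afp k := u ^+ 2 * w * e * Ap k.

Lemma Af_ident k :
  Af k - Af k.+1 = ((k == t)%:R - (k.+1 == t)%:R) + z * (Afp k - Af k + Af k.+1).
Proof.
have H := Ah_ident k.
rewrite /Afp /Af Hz.
move: ((k == t)%:R - (k.+1 == t)%:R) H => d H.
have -> : v * iw * (u ^+ 2 * w * e * Ap k - u ^+ 2 * w * e * Ah k + u ^+ 2 * w * e * Ah k.+1)
   = u ^+ 2 * e * (iw * w) * (v * (Ap k - Ah k + Ah k.+1)) by ring.
rewrite Hiw mulr1.
have -> : v * (Ap k - Ah k + Ah k.+1) = w * (Ah k - Ah k.+1) - d * (1 + v) ^+ 2 * (1 - v)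
  by rewrite -H; ring.
symmetry; transitivity (u ^+ 2 * w * e * Ah k - u ^+ 2 * w * e * Ah k.+1 + d -
  d * (u * (1 + v)) ^+ 2 * (e * (1 - v))); first by ring.
by rewrite Hu He; ring.
Qed.

End Alg.

Definition hgt (p : seq int) : int := \sum_(x <- p) x.

Section Comb.
Variable t : nat.

Definition ext (p : seq int) : seq int :=
  1 :: [seq - (j.+1)%:Z | j <- iota 0 (absz (hgt p + t%:Z))].

Fixpoint P (n : nat) : seq (seq int) :=
  if n is n'.+1 then [seq rcons p s | p <- P n', s <- ext p] else [:: [::]].

Definition valid (n : nat) (p : seq int) : bool :=
  [&& size p == n, all deutsch_step p & [forall k : 'I_n.+1, - (t%:Z) <= height p k]].

Lemma hgt_rcons q s : hgt (rcons q s) = hgt q + s.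
Proof. by rewrite /hgt -cats1 big_cat big_seq1. Qed.

Lemma height_size p : height p (size p) = hgt p.
Proof. by rewrite /height take_size. Qed.

Lemma height_rcons q s k : (k <= size q)%N -> height (rcons q s) k = height q k.
Proof. by move=> le; rewrite /height -cats1 takel_cat. Qed.

Lemma mem_ext q s : - (t%:Z) <= hgt q -> (s \in ext q) = (s == 1) || ((s <= -1) && (- (t%:Z) <= hgt q + s)).
Proof.
move=> hq; rewrite /ext inE; congr (_ || _).
apply/mapP/idP.
  move=> [j]; rewrite mem_iota add0n => jlt ->.
  apply/andP; split; lia.
move=> /andP [s1 s2].
exists (absz (- s - 1)); last lia.
rewrite mem_iota add0n; lia.
Qed.

Lemma valid_hgt n p : valid n p -> - (t%:Z) <= hgt p.
Proof.
case/and3P => /eqP sz _ /forallP H.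
by have := H ord_max; rewrite /= -sz height_size.
Qed.

Lemma forall_rcons n q s : size q = n ->
  [forall k : 'I_n.+2, - (t%:Z) <= height (rcons q s) k] =
  [forall k : 'I_n.+1, - (t%:Z) <= height q k] && (- (t%:Z) <= hgt q + s).
Proof.
move=> sz; apply/forallP/andP.
  move=> H; split.
    apply/forallP => k; have := H (inord k).
    rewrite inordK; last by apply: (leq_trans (ltn_ord k)).
    by rewrite height_rcons // sz -ltnS.
  have := H ord_max; rewrite /= -hgt_rcons.
  have <- : size (rcons q s) = n.+1 by rewrite size_rcons sz.
  by rewrite height_size.
move=> [/forallP H1 H2] k.
have [le|gt] := leqP (nat_of_ord k) n.
  rewrite height_rcons ?sz //.
  by have := H1 (inord k); rewrite inordK.
have -> : nat_of_ord k = size (rcons q s) by rewrite size_rcons sz; have := ltn_ord k; lia.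
by rewrite height_size hgt_rcons.
Qed.

Lemma validS n q s : valid n.+1 (rcons q s) =
  valid n q && ((s == 1) || ((s <= -1) && (- (t%:Z) <= hgt q + s))).
Proof.
have [sz|nsz] := eqVneq (size q) n; last first.
  by rewrite /valid size_rcons eqSS (negbTE nsz).
apply/idP/idP.
  rewrite /valid size_rcons eqSS sz eqxx all_rcons forall_rcons //=.
  case/and3P => /andP [ds al] fa hs.
  rewrite al fa /=; move: ds; rewrite /deutsch_step.
  case/orP => [/eqP -> | -> ]; first by rewrite eqxx.
  by rewrite hs orbT.
case/andP => vq H; have hq := valid_hgt vq.
move: vq; rewrite /valid size_rcons eqSS sz eqxx all_rcons forall_rcons //=.
case/andP => al fa; rewrite al fa /= andbT /deutsch_step.
case/orP: H => [/eqP -> | /andP [H1 H2]]; last by rewrite H1 H2 orbT.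
by rewrite eqxx /=; lia.
Qed.

Lemma memP n p : (p \in P n) = valid n p.
Proof.
elim: n p => [|n IH] p.
  rewrite /= inE /valid; case: p => [|x p] //=.
  by rewrite eqxx; symmetry; apply/forallP => k; rewrite /height big_nil; lia.
apply/allpairsPdep/idP.
  move=> [q [s [qin sin ->]]].
  rewrite IH in qin; rewrite validS qin /=.
  by rewrite -mem_ext // (valid_hgt qin).
case/lastP: p => [|q s].
  by rewrite /valid.
rewrite validS => /andP [vq H].
exists q, s; split => //; first by rewrite IH.
by rewrite mem_ext // (valid_hgt vq).
Qed.

Lemma uniqP n : uniq (P n).
Proof.
elim: n => [|n IH] //.
change (uniq [seq rcons p s | p <- P n, s <- ext p]).
apply: allpairs_uniq_dep => //.
  move=> q _; rewrite /ext /= map_inj_uniq ?iota_uniq ?andbT.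
    by apply/mapP => -[j _]; lia.
  by move=> a b; lia.
move=> [a x] [b y] _ _ /= E.
have := congr1 size E; rewrite !size_rcons => /eqP; rewrite eqSS => /eqP szE.
move: E; rewrite -!cats1 => /eqP; rewrite eqseq_cat // => /andP [/eqP ab /eqP xy].
by subst b; case: xy => ->.
Qed.
End Comb.

Lemma count_ext t q x : - (t%:Z) <= hgt q -> - (t%:Z) <= x ->
  count (fun s => hgt q + s == x) (ext t q) = addn (hgt q == (x - 1)%R) (x < hgt q)%R.
Proof.
move=> hq hx; rewrite /ext /= count_map.
have -> : (hgt q + 1 == x) = (hgt q == x - 1) by apply/eqP/eqP; lia.
congr (_ + _)%N.
have [lt|ge] := ltP x (hgt q).
  rewrite (@eq_count _ _ (pred1 (absz (hgt q - x - 1)%R))).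
    by rewrite count_uniq_mem ?iota_uniq // mem_iota add0n; lia.
  by move=> j /=; apply/eqP/eqP; lia.
rewrite (@eq_count _ _ pred0) ?count_pred0 //.
by move=> j /=; apply/eqP; lia.
Qed.

Lemma all_P t n : all (fun p => - (t%:Z) <= hgt p) (P t n).
Proof. by apply/allP => p; rewrite memP => /valid_hgt. Qed.

Lemma countS t n x : - (t%:Z) <= x ->
  count (fun p => hgt p == x) (P t n.+1) =
  addn (count (fun p => hgt p == (x - 1)%R) (P t n)) (count (fun p => (x < hgt p)%R) (P t n)).
Proof.
move=> hx; have := all_P t n.
change (all (fun p => - (t%:Z) <= hgt p) (P t n) ->
  count (fun p => hgt p == x) [seq rcons p s | p <- P t n, s <- ext t p] =
  addn (count (fun p => hgt p == (x - 1)%R) (P t n)) (count (fun p => (x < hgt p)%R) (P t n))).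
elim: (P t n) => [|q L IH] //= /andP [hq hL].
rewrite count_cat count_map IH //.
rewrite (@eq_count _ _ (fun s => hgt q + s == x)); last by move=> s /=; rewrite hgt_rcons.
have E := count_ext hq hx; rewrite /ext /= in E; rewrite hgt_rcons addnA E; lia.
Qed.

Lemma count_split (L : seq (seq int)) x :
  count (fun p => x < hgt p) L =
  addn (count (fun p => hgt p == (x + 1)%R) L) (count (fun p => (x + 1 < hgt p)%R) L).
Proof.
elim: L => [|q L IH] //=; rewrite IH.
have : (x < hgt q) = (hgt q == x + 1) || (x + 1 < hgt q).
  by apply/idP/orP; [lia | case; lia].
move=> ->; case: (eqVneq (hgt q) (x + 1)) => [->|ne] /=.
  by rewrite ltxx addnA.
lia.
Qed.

Lemma hgt_le p : all deutsch_step p -> hgt p <= (size p)%:Z.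
Proof.
elim: p => [|s p IH] /=; first by rewrite /hgt big_nil.
case/andP => ds al; rewrite /hgt big_cons -/(hgt p).
have := IH al; move: ds; rewrite /deutsch_step; case/orP => [/eqP ->|]; lia.
Qed.

Definition aN t n k : rat := (count (fun p => hgt p == k%:Z - t%:Z) (P t n))%:R.

Lemma aN0 t k : aN t 0 k = (k == t)%:R.
Proof.
rewrite /aN /= /hgt big_nil addn0.
by congr (nat_of_bool _)%:R; apply/eqP/eqP; lia.
Qed.

Lemma aN_big t n k : (t + n < k)%N -> aN t n k = 0.
Proof.
move=> lt; rewrite /aN (@eq_in_count _ _ pred0) ?count_pred0 //.
move=> p; rewrite memP => /and3P [/eqP sz al _] /=.
have := hgt_le al; rewrite sz => h; apply/eqP; lia.
Qed.

Lemma aN_rec t n k :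
  aN t n.+1 k + aN t n k =
  aN t n.+1 k.+1 + (if k is k'.+1 then aN t n k' else 0) + aN t n k.+1.
Proof.
rewrite /aN.
have h1 : - (t%:Z) <= k%:Z - t%:Z by lia.
have h2 : - (t%:Z) <= k.+1%:Z - t%:Z by lia.
rewrite (countS n h1) (countS n h2) (count_split _ (k%:Z - t%:Z)).
have -> : (k%:Z - t%:Z + 1 = k.+1%:Z - t%:Z) by lia.
have -> : (k.+1%:Z - t%:Z - 1 = k%:Z - t%:Z) by lia.
have -> : count (fun p => hgt p == k%:Z - t%:Z - 1) (P t n) =
  if k is k'.+1 then count (fun p => hgt p == k'%:Z - t%:Z) (P t n) else 0%N.
  case: k {h1 h2} => [|k].
    apply/eqP; rewrite -leqn0 leqNgt -has_count; apply/hasP => -[p pin /eqP].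
    have := allP (all_P t n) p pin => /= h; lia.
  by congr count; apply: funext => p; congr (_ == _); lia.
case: k {h1 h2} => [|k]; rewrite !natrD; ring.
Qed.

Lemma uniq_rec t (f g : nat -> nat -> rat) :
  (forall k, f 0%N k = (k == t)%:R) -> (forall k, g 0%N k = (k == t)%:R) ->
  (forall n k, (t + n < k)%N -> f n k = 0) -> (forall n k, (t + n < k)%N -> g n k = 0) ->
  (forall n k, f n.+1 k + f n k =
     f n.+1 k.+1 + (if k is k'.+1 then f n k' else 0) + f n k.+1) ->
  (forall n k, g n.+1 k + g n k =
     g n.+1 k.+1 + (if k is k'.+1 then g n k' else 0) + g n k.+1) ->
  forall n k, f n k = g n k.
Proof.
move=> f0 g0 fb gb fr gr; elim=> [|n IH] k; first by rewrite f0 g0.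
suff H : forall d k, (t + n.+1 < k + d)%N -> f n.+1 k = g n.+1 k by apply: (H (t + n.+2)%N); lia.
elim=> [|d IHd] {}k lt; first by rewrite fb ?gb //; lia.
have E := IHd k.+1 ltac:(lia).
have Ef := fr n k; have Eg := gr n k.
have Hp : (if k is k'.+1 then f n k' else 0) = (if k is k'.+1 then g n k' else 0).
  by case: k {lt E Ef Eg} => // k; rewrite IH.
rewrite !IH in Ef; rewrite Hp E in Ef.
rewrite -Eg in Ef; exact: (addIr _ Ef).
Qed.

Lemma natps0 (m : nat) j : (m%:R : ps) j.+1 = 0.
Proof. elim: m => [|m IH]; first by []. by rewrite mulrS psD IH ps1 addr0. Qed.

Definition uu (v : ps) := pinv (1 + v).
Definition ee (v : ps) := pinv (1 - v).
Definition ww (v : ps) : ps := 1 + v + v ^+ 2.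
Definition AF t v k := Af t v (uu v) (ww v) (ee v) k.

Section Series.
Variables (t : nat) (v : ps).
Hypothesis Hv0 : v 0%N = 0.
Hypothesis Hz : pX = v * pinv (ww v).

Lemma c0_1pv : (1 + v) 0%N = 1. Proof. by rewrite psD Hv0 ps1 addr0. Qed.
Lemma c0_1mv : (1 - v) 0%N = 1. Proof. by rewrite psB Hv0 ps1 subr0. Qed.
Lemma c0_w : ww v 0%N = 1.
Proof. by rewrite /ww !psD psX0 Hv0 ps1 expr0n /= !addr0. Qed.

Lemma Hu : uu v * (1 + v) = 1. Proof. by apply: finvK; rewrite c0_1pv oner_eq0. Qed.
Lemma He : ee v * (1 - v) = 1. Proof. by apply: finvK; rewrite c0_1mv oner_eq0. Qed.
Lemma Hiw : pinv (ww v) * ww v = 1. Proof. by apply: finvK; rewrite c0_w oner_eq0. Qed.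

Lemma c0_u : uu v 0%N = 1. Proof. by rewrite /uu finv0 c0_1pv invr1. Qed.
Lemma c0_e : ee v 0%N = 1. Proof. by rewrite /ee finv0 c0_1mv invr1. Qed.

Lemma AF_ident k :
  AF t v k - AF t v k.+1 =
  ((k == t)%:R - (k.+1 == t)%:R) + pX * (Afp t v (uu v) (ww v) (ee v) k - AF t v k + AF t v k.+1).
Proof. exact: (@Af_ident ps t v (uu v) (ww v) Hu (erefl _) (ee v) (pinv (ww v)) pX He Hiw Hz k). Qed.

Lemma AF_rec n k : AF t v k n.+1 + AF t v k n =
  AF t v k.+1 n.+1 + (if k is k'.+1 then AF t v k' n else 0) + AF t v k.+1 n.
Proof.
have := congr1 (fun f : ps => f n.+1) (AF_ident k).
rewrite /= psB psD psXS !psB !psD !natps0 subr0 add0r.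
have -> : Afp t v (uu v) (ww v) (ee v) k n =
   (if k is k'.+1 then AF t v k' n else 0).
  by case: k => [|k] //; rewrite /Afp /Ap mulr0.
rewrite psN => H; lra.
Qed.

Lemma AF0 k : AF t v k 0%N = (k == t)%:R.
Proof.
rewrite /AF /Af /Ah !psM0 !psX0 c0_u c0_w c0_e expr1n !mul1r.
case: leqP => h.
  rewrite psM0 psX0 psM0 Hv0 mul0r psB psX0 Hv0 !expr0n ps1 /= subr0 mulr1.
  have [->|ne] := eqVneq k t; first by rewrite subnn eqxx. by have -> : (k - t == 0)%N = false by lia.
have -> : (k == t) = false by apply/eqP; lia.
by rewrite !psM0 Hv0 mulr0 mul0r.
Qed.

Lemma ord_v : ord_ge v 1.
Proof. by move=> j; rewrite ltnS leqn0 => /eqP ->. Qed.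

Lemma AFbig n k : (t + n < k)%N -> AF t v k n = 0.
Proof.
move=> lt; rewrite /AF /Af /Ah.
have -> : (t <= k)%N by lia.
have H : ord_ge ((uu v) ^+ 2 * ww v * ee v * ((v * uu v) ^+ (k - t) * (1 - v ^+ t.+2)))
   (0 + ((1 + 0) * (k - t) + 0)).
  apply: ord_geM => //; apply: ord_geM => //; apply: ord_geX.
  by apply: ord_geM; [exact: ord_v | exact: ord_ge0].
apply: H; rewrite add0n addn0 addn0 mul1n; lia.
Qed.

Lemma AF_aN n k : AF t v k n = aN t n k.
Proof.
apply: (@uniq_rec t (fun n k => AF t v k n) (aN t)) => //.
- exact: AF0.
- exact: aN0.
- by move=> *; apply: AFbig.
- by move=> *; apply: aN_big.
- exact: AF_rec.
- exact: aN_rec.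
Qed.
End Series.

Lemma c_count t i n (s : seq (seq int)) : uniq s ->
  (forall p, (p \in s) = deutsch_path t i n p) ->
  size s = count (fun p => hgt p == i) (P t n).
Proof.
move=> us ms; rewrite -size_filter; apply: perm_size.
apply: uniq_perm => //; first by rewrite filter_uniq // uniqP.
move=> p; rewrite ms mem_filter memP /deutsch_path /valid.
have [sz|nsz] := eqVneq (size p) n; last by rewrite andbF.
rewrite -sz height_size.
by case: (hgt p == i); case: (all deutsch_step p); case: [forall k, _].
Qed.

Lemma app_eq (f g : ps) n : f = g -> f n = g n.
Proof. by move->. Qed.
Lemma fdivE (f g : ps) : fdiv f g = f * pinv g. Proof. by []. Qed.

Theorem theorem6 (t : nat) (i : int) (c : nat -> nat) (v : fps) :
  - (t%:Z) <= i ->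
  (forall n : nat, exists s : seq (seq int),
      [/\ uniq s, forall p, (p \in s) = deutsch_path t i n p & size s = c n]) ->
  v 0%N = 0 ->
  fX = fdiv v (fadd (fadd fone v) (fpow v 2)) ->
  let Phi : fps := fun n => (c n)%:R in
  let w : fps := fadd (fadd fone v) (fpow v 2) in
  (i < 0 ->
     forall n, Phi n =
       fdiv (fmul (fmul (fmul (fpowz (fadd fone v) (- i - 2))
                               (fsub fone (fpowz v (i + t%:Z + 1)))) v) w)
            (fsub fone v) n) /\
  (0 <= i ->
     forall n, Phi n =
       fdiv (fmul (fmul (fpowz v i) (fsub fone (fpow v t.+2))) w)
            (fmul (fsub fone v) (fpowz (fadd fone v) (i + 2))) n).
Proof.
move=> hi Hc Hv0 Hz Phi w.
have Hz' : pX = (v : ps) * pinv (ww v) by rewrite fpowE in Hz; exact: Hz.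
pose K := absz (i + t%:Z).
have KE : K%:Z - t%:Z = i by rewrite /K; lia.
have PhiE : forall n, Phi n = AF t v K n.
  move=> n; rewrite /Phi (@AF_aN t v Hv0 Hz' n K) /aN KE.
  by have [s [us ms <-]] := Hc n; rewrite (c_count us ms).
have wE : w = ww v :> ps by rewrite /w fpowE.
have Hu := @Hu v Hv0.
split => [ilt n | ige n]; rewrite PhiE {PhiE Hc}.
  have [j Ej] : exists j : nat, i = Negz j by move: ilt; case: (i) => // j; exists j.
  have Kt : (K = t - j.+1)%N by move: KE; rewrite Ej NegzE; lia.
  rewrite Kt Ej; rewrite Ej in hi; move: hi; rewrite NegzE => hi.
  have -> : Negz j + t%:Z + 1 = (t - j)%N%:Z by rewrite NegzE; lia.
  case: j hi {Kt Ej} => [|j] hi.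
    have -> : - - (0.+1)%:Z - 2 = Negz 0 by [].
    apply: app_eq; rewrite /= !fdivE !fmulE !fsubE !faddE !foneE !fpowE wE subn0.
    rewrite /AF /Af /Ah.
    have -> : (t <= t - 1)%N = false by lia.
    have -> : (t - (t - 1) = 1)%N by lia.
    have -> : ((t - 1).+1 = t)%N by lia.
    transitivity ((uu v * (1 + (v : ps))) * (uu v * ww v * ee v * (v : ps) * (1 - (v : ps) ^+ t))); first by ring.
    by rewrite Hu /uu /ee /pinv; ring.
  have -> : - - (j.+2)%:Z - 2 = j%:Z by lia.
  apply: app_eq; rewrite /= !fdivE !fmulE !fsubE !faddE !foneE !fpowE wE.
  rewrite /AF /Af /Ah.
  have -> : (t <= t - j.+2)%N = false by lia.
  have -> : (t - (t - j.+2) = j.+2)%N by lia.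
  have -> : ((t - j.+2).+1 = t - j.+1)%N by lia.
  rewrite !exprS expr0 !mulr1.
  transitivity ((uu v * (1 + (v : ps))) * (uu v * (1 + (v : ps))) * ((1 + (v : ps)) ^+ j * ww v * ee v * (v : ps) * (1 - (v : ps) ^+ (t - j.+1)))); first by ring.
  by rewrite Hu /uu /ee /pinv; ring.
have [i' Ei] : exists i' : nat, i = Posz i' by move: ige; case: (i) => // i'; exists i'.
have Kt : (K = i' + t)%N by move: KE; rewrite Ei; lia.
rewrite Kt Ei.
have -> : i'%:Z + 2 = (i'.+2)%:Z by lia.
apply: app_eq; rewrite /= !fdivE !fmulE !fsubE !faddE !foneE !fpowE wE.
rewrite -!exprS.
rewrite finvM; last first.
- by rewrite psX0 (c0_1pv Hv0) expr1n oner_eq0.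
- by rewrite (c0_1mv Hv0) oner_eq0.
rewrite finvX; last by rewrite (c0_1pv Hv0) oner_eq0.
rewrite /AF /Af /Ah.
have -> : (t <= i' + t)%N by lia.
have -> : (i' + t - t = i')%N by lia.
rewrite exprMn !exprS /uu /ee; ring.
Qed.
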